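(* Let $W\in\mathbb{D}_n$ satisfy the Ground Assumption and let $\sigma\subset\mathcal{E}$. Then $\sigma\in\mathcal{C}(W)$ if and only if $\sigma\sqcup\mathcal{I}\in FP(W)$.
   Context: Threshold-linear network: $\dot x_i=-x_i+[\sum_j W_{ij}x_j+b_i]_+$ with $[y]_+=\max(0,y)$; a fixed point is $x^*$ with $x^*=[Wx^*+b]_+$. A Dale matrix $W\in\mathbb{D}_n$ is an $n\times n$ real matrix with a partition $[n]=\mathcal{E}\sqcup\mathcal{I}$ such that $W_{ii}=0$, $W_{ji}\ge0$ for all $j$ if $i\in\mathcal{E}$, $W_{ji}\le0$ for all $j$ if $i\in\mathcal{I}$. Ground Assumption: $(I-W)_\sigma$ nonsingular for every nonempty $\sigma\subset[n]$. Excitatory support: $\mathrm{supp}_+x=\{i\in\mathcal{E}:x_i>0\}$. Combinatorial code: $\mathcal{C}(W)=\{\mathrm{supp}_+x^*: b\in\mathbb{R}^n_{\ge0},\ x^*\in\mathbb{R}^n_{\ge0}\text{ a fixed point of }(W,b)\}$. $FP(W,b)$ is the set of supports $\{i\in[n]:x^*_i>0\}$ of all fixed points $x^*$ of $(W,b)$, and $FP(W)=\bigcup_{b\in\mathbb{R}^n_{\ge0}}FP(W,b)$. *)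

(* Defs.v *)
From HB Require Import structures.
From mathcomp Require Import all_boot all_order all_algebra.
Set Implicit Arguments. Unset Strict Implicit. Unset Printing Implicit Defensive.
Import Order.TTheory GRing.Theory Num.Theory.
Local Open Scope ring_scope.

Section TLN.
Variables (R : realFieldType) (n : nat).

(* W is a Dale matrix with excitatory set E (inhibitory set = ~: E):
   zero diagonal, columns of excitatory neurons nonnegative,
   columns of inhibitory neurons nonpositive. *)
Definition is_Dale (W : 'M[R]_n) (E : {set 'I_n}) : Prop :=
  (forall i, W i i = 0) /\
  (forall i, i \in E -> forall j, 0 <= W j i) /\
  (forall i, i \notin E -> forall j, W j i <= 0).

Definition principal_submx (A : 'M[R]_n) (s : {set 'I_n}) : 'M[R]_#|s| :=
  \matrix_(i < #|s|, j < #|s|) A (enum_val i) (enum_val j).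

Definition ground_assumption (W : 'M[R]_n) : Prop :=
  forall s : {set 'I_n}, s != set0 ->
    principal_submx (1%:M - W) s \in unitmx.

Definition is_fixed_point (W : 'M[R]_n) (b x : 'I_n -> R) : Prop :=
  forall i, x i = Num.max 0 (\sum_j W i j * x j + b i).

Definition supp (x : 'I_n -> R) : {set 'I_n} := [set i | 0 < x i].

Definition supp_plus (E : {set 'I_n}) (x : 'I_n -> R) : {set 'I_n} :=
  [set i in E | 0 < x i].

Definition nonneg (v : 'I_n -> R) : Prop := forall i, 0 <= v i.

Definition in_FPb (W : 'M[R]_n) (b : 'I_n -> R) (s : {set 'I_n}) : Prop :=
  exists x, is_fixed_point W b x /\ supp x = s.

Definition in_FP (W : 'M[R]_n) (s : {set 'I_n}) : Prop :=
  exists b, nonneg b /\ in_FPb W b s.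

Definition in_code (W : 'M[R]_n) (E : {set 'I_n}) (s : {set 'I_n}) : Prop :=
  exists b x, nonneg b /\ nonneg x /\ is_fixed_point W b x /\ supp_plus E x = s.

End TLN.

(* Main.v *)
Require Import Defs.
From HB Require Import structures.
From mathcomp Require Import all_boot all_order all_algebra.
Import Order.TTheory GRing.Theory Num.Theory.
Local Open Scope ring_scope.

Theorem mainTheorem13 (R : realFieldType) (n : nat) (W : 'M[R]_n)
    (E : {set 'I_n}) (sigma : {set 'I_n}) :
  is_Dale W E -> ground_assumption W -> sigma \subset E ->
  (in_code W E sigma <-> in_FP W (sigma :|: ~: E)).
Proof.
move=> [Wd [WE WI]] _ sE; split.
- move=> [b [x [b0 [x0 [fx sx]]]]].
  pose x' := fun k : 'I_n => x k + (k \notin E)%:R.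
  pose s := fun j : 'I_n => \sum_k W j k * x k.
  pose d := fun j : 'I_n => \sum_k W j k * (k \notin E)%:R.
  have hs' : forall j, \sum_k W j k * x' k = s j + d j.
    by move=> j; rewrite /s /d -big_split /=; apply: eq_bigr => k _; rewrite mulrDr.
  have hd : forall j, d j <= 0.
    move=> j; apply: sumr_le0 => k _; case: (boolP (k \in E)) => kE /=.
      by rewrite mulr0.
    by rewrite mulr1; apply: WI.
  have hxs : forall j, s j <= x j.
    move=> j; rewrite [x j]fx; apply: (@le_trans _ _ (s j + b j)).
      by rewrite lerDl.
    by rewrite le_max lexx orbT.
  exists (fun j => if (j \notin E) || (0 < x j) then x' j - (s j + d j) else b j).
  split.
    move=> j; case: ifP => _ //.
    rewrite subr_ge0 /x' (le_trans (lerD (hxs j) (hd j))) // lerD2l.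
    by case: (j \notin E).
  exists x'; split.
    move=> j; rewrite hs'; case: ifP => hj.
      rewrite addrC subrK; apply/esym/max_idPr.
      rewrite /x'; apply: addr_ge0.
        by rewrite fx le_max lexx.
      by case: (j \notin E).
    move/negbT: hj; rewrite negb_or negbK => /andP[jE xj].
    have x0j : x j = 0.
      by apply/eqP; rewrite eq_le leNgt xj /= fx le_max lexx.
    rewrite /x' jE /= addr0 x0j; apply/esym/max_idPl.
    have : Num.max 0 (s j + b j) <= 0 by rewrite -fx x0j.
    rewrite ge_max => /andP[_ h].
    by apply: le_trans h; rewrite addrAC gerDl hd.
  apply/setP=> i; rewrite !inE /x'.
  case: (boolP (i \in E)) => iE /=.
    by rewrite addr0 orbF -sx inE iE.
  by rewrite orbT ltr_pwDr // (x0 i).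
- move=> [b [b0 [x [fx sx]]]].
  have x0 : nonneg x by move=> i; rewrite fx le_max lexx.
  exists b, x; split=> //; split=> //; split=> //.
  apply/setP=> i; move/setP: sx => /(_ i); rewrite !inE => h.
  case: (boolP (i \in E)) => iE /=.
    by rewrite h iE orbF.
  apply/esym/negbTE; apply: contra iE; exact: (subsetP sE).
Qed.
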